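(* Let $\mathcal{P}=((\mathcal{S},\mathcal{T}),(\mathcal{U},\mathcal{V}))$ be a twin cotorsion pair on a triangulated category $\mathcal{C}$. Then for every $X\in\mathcal{C}^-$, $\tau^+(X)$ is isomorphic in $\mathcal{C}/\mathcal{W}$ to an object of $\mathcal{H}$, and for every $Y\in\mathcal{C}^+$, $\tau^-(Y)$ is isomorphic in $\mathcal{C}/\mathcal{W}$ to an object of $\mathcal{H}$; i.e. $\tau^+(\mathcal{C}^-/\mathcal{W})\subseteq\mathcal{H}/\mathcal{W}$ and $\tau^-(\mathcal{C}^+/\mathcal{W})\subseteq\mathcal{H}/\mathcal{W}$.
   Context: For full subcategories $\mathcal{X},\mathcal{Y}$, $\mathcal{X}*\mathcal{Y}$ is the full subcategory of objects $C$ admitting a distinguished triangle $X\to C\to Y\to X[1]$ with $X\in\mathcal{X}$, $Y\in\mathcal{Y}$. A cotorsion pair $(\mathcal{A},\mathcal{B})$: full subcategories closed under isomorphisms, finite direct sums and summands with $\mathcal{C}=\mathcal{A}*\mathcal{B}[1]$ and $\mathcal{C}(\mathcal{A},\mathcal{B}[1])=0$. A twin cotorsion pair $((\mathcal{S},\mathcal{T}),(\mathcal{U},\mathcal{V}))$: two cotorsion pairs with $\mathcal{C}(\mathcal{S},\mathcal{V}[1])=0$. Put $\mathcal{W}=\mathcal{U}\cap\mathcal{T}$, $\mathcal{C}^+=\mathcal{W}*\mathcal{V}[1]$, $\mathcal{C}^-=\mathcal{S}[-1]*\mathcal{W}$, $\mathcal{H}=\mathcal{C}^+\cap\mathcal{C}^-$;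 $\mathcal{C}/\mathcal{W}$, $\mathcal{H}/\mathcal{W}$ are ideal quotients by morphisms factoring through objects of $\mathcal{W}$. The inclusion $\mathcal{C}^+/\mathcal{W}\hookrightarrow\mathcal{C}/\mathcal{W}$ has a left adjoint $\tau^+$ and $\mathcal{C}^-/\mathcal{W}\hookrightarrow\mathcal{C}/\mathcal{W}$ has a right adjoint $\tau^-$. *)

(* Defs.v *)
From HB Require Import structures.
From mathcomp Require Import all_boot all_algebra.
Set Implicit Arguments. Unset Strict Implicit. Unset Printing Implicit Defensive.
Import GRing.Theory.
Local Open Scope ring_scope.

Record TriCat := {
  Obj : Type;
  Mor : Obj -> Obj -> zmodType;
  idm : forall X, Mor X X;
  comp : forall X Y Z, Mor Y Z -> Mor X Y -> Mor X Z;   (* comp g f = g o f *)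
  compA : forall X Y Z T (h : Mor Z T) (g : Mor Y Z) (f : Mor X Y),
      comp h (comp g f) = comp (comp h g) f;
  comp1m : forall X Y (f : Mor X Y), comp (idm Y) f = f;
  compm1 : forall X Y (f : Mor X Y), comp f (idm X) = f;
  compDl : forall X Y Z (g1 g2 : Mor Y Z) (f : Mor X Y),
      comp (g1 + g2) f = comp g1 f + comp g2 f;
  compDr : forall X Y Z (g : Mor Y Z) (f1 f2 : Mor X Y),
      comp g (f1 + f2) = comp g f1 + comp g f2;
  zobj : Obj;
  zobj_init : forall X (f : Mor zobj X), f = 0;
  zobj_term : forall X (f : Mor X zobj), f = 0;
  bip : Obj -> Obj -> Obj;
  bin1 : forall X Y, Mor X (bip X Y);
  bin2 : forall X Y, Mor Y (bip X Y);
  bpr1 : forall X Y, Mor (bip X Y) X;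
  bpr2 : forall X Y, Mor (bip X Y) Y;
  bip_11 : forall X Y, comp (bpr1 X Y) (bin1 X Y) = idm X;
  bip_22 : forall X Y, comp (bpr2 X Y) (bin2 X Y) = idm Y;
  bip_12 : forall X Y, comp (bpr1 X Y) (bin2 X Y) = 0;
  bip_21 : forall X Y, comp (bpr2 X Y) (bin1 X Y) = 0;
  bip_id : forall X Y, comp (bin1 X Y) (bpr1 X Y) + comp (bin2 X Y) (bpr2 X Y)
                       = idm (bip X Y);
  shift : Obj -> Obj;
  shiftH : forall X Y, Mor X Y -> Mor (shift X) (shift Y);
  shiftH_id : forall X, shiftH (idm X) = idm (shift X);
  shiftH_comp : forall X Y Z (g : Mor Y Z) (f : Mor X Y),
      shiftH (comp g f) = comp (shiftH g) (shiftH f);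
  shiftH_add : forall X Y (f g : Mor X Y), shiftH (f + g) = shiftH f + shiftH g;
  shiftH_inj : forall X Y (f g : Mor X Y), shiftH f = shiftH g -> f = g;
  shiftH_surj : forall X Y (g : Mor (shift X) (shift Y)), exists f, shiftH f = g;
  shift_ess : forall Y, exists X (f : Mor (shift X) Y) (g : Mor Y (shift X)),
      comp g f = idm (shift X) /\ comp f g = idm Y;
  dist : forall X Y Z, Mor X Y -> Mor Y Z -> Mor Z (shift X) -> Prop;
  dist_iso : forall X Y Z X' Y' Z' (u : Mor X Y) (v : Mor Y Z) (w : Mor Z (shift X))
      (u' : Mor X' Y') (v' : Mor Y' Z') (w' : Mor Z' (shift X'))
      (a : Mor X X') (a' : Mor X' X) (b : Mor Y Y') (b' : Mor Y' Y)
      (c : Mor Z Z') (c' : Mor Z' Z),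
      comp a' a = idm X -> comp a a' = idm X' ->
      comp b' b = idm Y -> comp b b' = idm Y' ->
      comp c' c = idm Z -> comp c c' = idm Z' ->
      comp b u = comp u' a -> comp c v = comp v' b ->
      comp (shiftH a) w = comp w' c ->
      dist u v w -> dist u' v' w';
  dist_idm : forall X, dist (idm X) (0 : Mor X zobj) (0 : Mor zobj (shift X));
  dist_ext : forall X Y (u : Mor X Y), exists Z (v : Mor Y Z) (w : Mor Z (shift X)),
      dist u v w;
  dist_rot : forall X Y Z (u : Mor X Y) (v : Mor Y Z) (w : Mor Z (shift X)),
      dist u v w <-> dist v w (- shiftH u);
  dist_morph : forall X Y Z X' Y' Z' (u : Mor X Y) (v : Mor Y Z) (w : Mor Z (shift X))
      (u' : Mor X' Y') (v' : Mor Y' Z') (w' : Mor Z' (shift X'))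
      (a : Mor X X') (b : Mor Y Y'),
      dist u v w -> dist u' v' w' -> comp b u = comp u' a ->
      exists c : Mor Z Z', comp c v = comp v' b /\ comp (shiftH a) w = comp w' c;
  dist_oct : forall X Y Z Z' X' Y' (u : Mor X Y) (j : Mor Y Z') (k : Mor Z' (shift X))
      (v : Mor Y Z) (l : Mor Z X') (i : Mor X' (shift Y))
      (m : Mor Z Y') (n : Mor Y' (shift X)),
      dist u j k -> dist v l i -> dist (comp v u) m n ->
      exists (f : Mor Z' Y') (g : Mor Y' X'),
        dist f g (comp (shiftH j) i) /\
        comp f j = comp m v /\ comp n f = k /\
        comp g m = l /\ comp i g = comp (shiftH u) n
}.

Arguments Mor {_}.
Arguments idm {_} X.
Arguments comp {_ X Y Z}.
Arguments zobj {_}.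
Arguments bip {_}.
Arguments shift {_}.
Arguments shiftH {_ X Y}.
Arguments dist {_ X Y Z}.

Section Defs.
Variable C : TriCat.

Definition subcat := Obj C -> Prop.

Definition is_iso (X Y : Obj C) : Prop :=
  exists (f : Mor X Y) (g : Mor Y X), comp g f = idm X /\ comp f g = idm Y.

Definition good_subcat (P : subcat) : Prop :=
  (forall X Y, is_iso X Y -> P X -> P Y) /\
  P zobj /\ (forall X Y, P X -> P Y -> P (bip X Y)) /\
  (forall X Y, P (bip X Y) -> P X /\ P Y).

(* B[1] and S[-1] as full subcategories (closed under isomorphism) *)
Definition shift_sub (P : subcat) : subcat :=
  fun Y => exists B, P B /\ is_iso Y (shift B).
Definition unshift_sub (P : subcat) : subcat :=
  fun Y => exists S, P S /\ is_iso (shift Y) S.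

Definition star (P Q : subcat) : subcat := fun M =>
  exists X Y (u : Mor X M) (v : Mor M Y) (w : Mor Y (shift X)),
    P X /\ Q Y /\ dist u v w.

Definition cotorsion_pair (A B : subcat) : Prop :=
  good_subcat A /\ good_subcat B /\
  (forall M, star A (shift_sub B) M) /\
  (forall X Y, A X -> B Y -> forall f : Mor X (shift Y), f = 0).

Definition twin_cotorsion_pair (S T U V : subcat) : Prop :=
  cotorsion_pair S T /\ cotorsion_pair U V /\
  (forall X Y, S X -> V Y -> forall f : Mor X (shift Y), f = 0).

Definition capS (P Q : subcat) : subcat := fun X => P X /\ Q X.

(* All definitions below take the whole twin (S,T,U,V) as explicit
   parameters, even if some component is unused. *)
Definition Wc (S T U V : subcat) : subcat := capS U T.
Definition Cplus (S T U V : subcat) : subcat := star (Wc S T U V) (shift_sub V).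
Definition Cminus (S T U V : subcat) : subcat := star (unshift_sub S) (Wc S T U V).
Definition Hc (S T U V : subcat) : subcat := capS (Cplus S T U V) (Cminus S T U V).

(* morphisms factoring through an object of W (the ideal quotiented out in C/W) *)
Definition factorsW (S T U V : subcat) X Y (f : Mor X Y) : Prop :=
  exists W0 (g : Mor X W0) (h : Mor W0 Y), Wc S T U V W0 /\ f = comp h g.

Definition eqW (S T U V : subcat) X Y (f g : Mor X Y) : Prop :=
  factorsW S T U V (f - g).

Definition isoW (S T U V : subcat) (X Y : Obj C) : Prop :=
  exists (f : Mor X Y) (g : Mor Y X),
    eqW S T U V (comp g f) (idm X) /\ eqW S T U V (comp f g) (idm Y).

(* (X', eta) is a value tau^+(X) of the left adjoint of the inclusion
   C^+/W -> C/W at X, i.e. a reflection of X into C^+/W *)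
Definition tau_plus_of (S T U V : subcat) (X X' : Obj C) (eta : Mor X X') : Prop :=
  Cplus S T U V X' /\
  forall Y, Cplus S T U V Y ->
    (forall g : Mor X Y, exists h : Mor X' Y, eqW S T U V (comp h eta) g) /\
    (forall h1 h2 : Mor X' Y,
        eqW S T U V (comp h1 eta) (comp h2 eta) -> eqW S T U V h1 h2).

(* (Y', eps) is a value tau^-(Y) of the right adjoint of the inclusion
   C^-/W -> C/W at Y, i.e. a coreflection of Y into C^-/W *)
Definition tau_minus_of (S T U V : subcat) (Y Y' : Obj C) (eps : Mor Y' Y) : Prop :=
  Cminus S T U V Y' /\
  forall Z, Cminus S T U V Z ->
    (forall g : Mor Z Y, exists h : Mor Z Y', eqW S T U V (comp eps h) g) /\
    (forall h1 h2 : Mor Z Y',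
        eqW S T U V (comp eps h1) (comp eps h2) -> eqW S T U V h1 h2).
End Defs.

(* Main.v *)
From mathcomp Require Import all_boot all_algebra.
Require Import Defs.
Set Implicit Arguments. Unset Strict Implicit. Unset Printing Implicit Defensive.
Import GRing.Theory.
Local Open Scope ring_scope.

Section Basics.
Variable C : TriCat.
Implicit Types X Y Z : Obj C.

Lemma comp0m X Y Z (f : Mor X Y) : comp (0 : Mor Y Z) f = 0.
Proof.
by apply: (addrI (comp (0 : Mor Y Z) f)); rewrite -compDl !addr0.
Qed.

Lemma compm0 X Y Z (g : Mor Y Z) : comp g (0 : Mor X Y) = 0.
Proof.
by apply: (addrI (comp g (0 : Mor X Y))); rewrite -compDr !addr0.
Qed.

Lemma compNl X Y Z (g : Mor Y Z) (f : Mor X Y) : comp (- g) f = - comp g f.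
Proof. by apply/eqP; rewrite -addr_eq0 -compDl addNr comp0m. Qed.

Lemma compNr X Y Z (g : Mor Y Z) (f : Mor X Y) : comp g (- f) = - comp g f.
Proof. by apply/eqP; rewrite -addr_eq0 -compDr addNr compm0. Qed.

Lemma compBl X Y Z (g1 g2 : Mor Y Z) (f : Mor X Y) : comp (g1 - g2) f = comp g1 f - comp g2 f.
Proof. by rewrite compDl compNl. Qed.

Lemma compBr X Y Z (g : Mor Y Z) (f1 f2 : Mor X Y) : comp g (f1 - f2) = comp g f1 - comp g f2.
Proof. by rewrite compDr compNr. Qed.

Lemma shiftH0 X Y : shiftH (0 : Mor X Y) = 0.
Proof.
by apply: (addrI (shiftH (0 : Mor X Y))); rewrite -shiftH_add !addr0.
Qed.

Lemma shiftHN X Y (f : Mor X Y) : shiftH (- f) = - shiftH f.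
Proof. by apply/eqP; rewrite -addr_eq0 -shiftH_add addNr shiftH0. Qed.

Lemma shiftH_eq0 X Y (f : Mor X Y) : shiftH f = 0 -> f = 0.
Proof. by move=> H; apply: shiftH_inj; rewrite H shiftH0. Qed.

Lemma zobj_idm : idm (@zobj C) = 0.
Proof. exact: zobj_init. Qed.

Lemma shift_zobj_idm : idm (shift (@zobj C)) = 0.
Proof. by rewrite -shiftH_id zobj_idm shiftH0. Qed.

Lemma dist_tr3 X Y Z Z' (u : Mor X Y) (v : Mor Y Z) (w : Mor Z (shift X))
  (c : Mor Z Z') (c' : Mor Z' Z) :
  comp c' c = idm Z -> comp c c' = idm Z' -> dist u v w -> dist u (comp c v) (comp w c').
Proof.
move=> H1 H2 D.
apply: (dist_iso (a:=idm X) (a':=idm X) (b:=idm Y) (b':=idm Y) (c:=c) (c':=c')) D;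
  rewrite ?comp1m ?compm1 ?shiftH_id ?comp1m //.
by rewrite -compA H1 compm1.
Qed.

Lemma dist_tr2 X Y Z Y' (u : Mor X Y) (v : Mor Y Z) (w : Mor Z (shift X))
  (b : Mor Y Y') (b' : Mor Y' Y) :
  comp b' b = idm Y -> comp b b' = idm Y' -> dist u v w -> dist (comp b u) (comp v b') w.
Proof.
move=> H1 H2 D.
apply: (dist_iso (a:=idm X) (a':=idm X) (b:=b) (b':=b') (c:=idm Z) (c':=idm Z)) D;
  rewrite ?comp1m ?compm1 ?shiftH_id ?comp1m //.
by rewrite -compA H1 compm1.
Qed.

Lemma dist_tr1 X Y Z X' (u : Mor X Y) (v : Mor Y Z) (w : Mor Z (shift X))
  (a : Mor X X') (a' : Mor X' X) :
  comp a' a = idm X -> comp a a' = idm X' -> dist u v w -> dist (comp u a') v (comp (shiftH a) w).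
Proof.
move=> H1 H2 D.
apply: (dist_iso (a:=a) (a':=a') (b:=idm Y) (b':=idm Y) (c:=idm Z) (c':=idm Z)) D;
  rewrite ?comp1m ?compm1 ?shiftH_id ?comp1m //.
by rewrite -compA H1 compm1.
Qed.

Lemma dist_comp0 X Y Z (u : Mor X Y) (v : Mor Y Z) (w : Mor Z (shift X)) :
  dist u v w -> comp v u = 0.
Proof.
move=> D.
have [c [Hc _]] := dist_morph (a:=idm X) (b:=u) (dist_idm X) D (esym (erefl _)).
by rewrite -Hc compm0.
Qed.

Lemma dist_zT X : dist (0 : Mor (@zobj C) X) (idm X) (0 : Mor X (shift zobj)).
Proof.
have H1 : comp (0 : Mor (shift (@zobj C)) zobj) (0 : Mor zobj (shift zobj)) = idm zobj.
  by rewrite comp0m zobj_idm.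
have H2 : comp (0 : Mor zobj (shift (@zobj C))) (0 : Mor (shift zobj) zobj) = idm (shift zobj).
  by rewrite comp0m shift_zobj_idm.
have D := dist_tr3 H1 H2 (dist_idm X).
rewrite comp0m compm0 in D.
by apply/dist_rot; rewrite shiftH0 oppr0.
Qed.

Lemma exact_r X Y Z T0 (u : Mor X Y) (v : Mor Y Z) (w : Mor Z (shift X)) (f : Mor Y T0) :
  dist u v w -> comp f u = 0 -> exists g : Mor Z T0, f = comp g v.
Proof.
move=> D Hf.
have [c [Hc _]] := dist_morph (a:=(0 : Mor X zobj)) (b:=f) D (dist_zT T0)
  (etrans Hf (esym (compm0 _ _))).
by exists c; rewrite Hc comp1m.
Qed.

Lemma exact_l X Y Z T0 (u : Mor X Y) (v : Mor Y Z) (w : Mor Z (shift X)) (f : Mor T0 Y) :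
  dist u v w -> comp v f = 0 -> exists g : Mor T0 X, f = comp u g.
Proof.
move=> D Hf.
have D1 := (dist_rot _ _ _).1 (dist_idm T0).
have D2 := (dist_rot _ _ _).1 D.
have [c [_ Hc]] := dist_morph (a:=f) (b:=(0 : Mor zobj Z)) D1 D2
  (etrans (compm0 _ _) (esym Hf)).
have [g Hg] := shiftH_surj c.
exists g; apply: shiftH_inj.
move: Hc; rewrite shiftH_id compNr compm1 compNl -Hg -shiftH_comp.
by move/eqP; rewrite eqr_opp => /eqP.
Qed.

Lemma rot_back X Y Z Z0 (u : Mor X Y) (v : Mor Y Z) (w : Mor Z (shift X))
  (p : Mor Z (shift Z0)) (p' : Mor (shift Z0) Z) :
  comp p' p = idm Z -> comp p p' = idm (shift Z0) ->
  dist u v w -> exists x : Mor Z0 X, dist x u (comp p v).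
Proof.
move=> H1 H2 D.
have D1 := dist_tr3 H1 H2 D.
have [x0 Hx] := shiftH_surj (comp w p').
exists (- x0); apply/dist_rot.
by rewrite shiftHN opprK Hx.
Qed.

Lemma bip_ext X Y A (g1 g2 : Mor A (bip X Y)) :
  comp (bpr1 X Y) g1 = comp (bpr1 X Y) g2 -> comp (bpr2 X Y) g1 = comp (bpr2 X Y) g2 ->
  g1 = g2.
Proof.
move=> H1 H2.
rewrite -(comp1m g1) -(comp1m g2) -(bip_id X Y) !compDl -!compA H1 H2 //.
Qed.

Lemma bip_comp (A B P Q : Obj C) (s : Mor A Q) (t : Mor B Q) (a : Mor P A) (b : Mor P B) :
  comp (comp s (bpr1 A B) + comp t (bpr2 A B)) (comp (bin1 A B) a + comp (bin2 A B) b)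
  = comp s a + comp t b.
Proof.
rewrite compDl !compDr -!compA ![comp (bpr1 A B) (comp _ _)]compA ![comp (bpr2 A B) (comp _ _)]compA.
by rewrite bip_11 bip_12 bip_21 bip_22 !comp0m !compm0 !comp1m addr0 add0r.
Qed.

Lemma retract_bip (M N : Obj C) (s : Mor M N) (r : Mor N M) :
  comp r s = idm M -> exists K, is_iso N (bip M K).
Proof.
move=> Hrs.
have [K [v [w D]]] := dist_ext s.
have Dr := (dist_rot _ _ _).1 D.
have w0 : w = 0.
  have := dist_comp0 ((dist_rot _ _ _).1 Dr); rewrite compNl => /eqP; rewrite oppr_eq0 => /eqP H.
  by rewrite -(comp1m w) -shiftH_id -Hrs shiftH_comp -compA H compm0.
have [t Ht] : exists t : Mor K N, idm K = comp v t.
  by apply: (exact_l Dr); rewrite compm1.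
have vs : comp v s = 0 := dist_comp0 D.
set r' := r - comp r (comp t v).
have r's : comp r' s = idm M by rewrite /r' compBl -!compA vs !compm0 subr0.
have r't : comp r' t = 0.
  by rewrite /r' compBl -!compA -Ht compm1 subrr.
exists K.
exists (comp (bin1 M K) r' + comp (bin2 M K) v), (comp s (bpr1 M K) + comp t (bpr2 M K)).
split.
- set Dd := idm N - (comp s r' + comp t v).
  have Ds : comp Dd s = 0.
    by rewrite /Dd compBl comp1m compDl -!compA r's vs compm1 compm0 addr0 subrr.
  have [m Hm] := exact_r D Ds.
  have Dt : comp Dd t = 0.
    by rewrite /Dd compBl comp1m compDl -!compA r't -Ht compm0 compm1 add0r subrr.
  have m0 : m = 0 by move: Dt; rewrite Hm -compA -Ht compm1.
  apply/eqP; rewrite -subr_eq0; apply/eqP.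
  rewrite bip_comp.
  have : Dd = 0 by rewrite Hm m0 comp0m.
  by rewrite /Dd => /eqP; rewrite subr_eq0 => /eqP <-; rewrite subrr.
- clearbody r'. apply: bip_ext; rewrite compm1 !(compDl, compDr) !compA.
  + rewrite bip_11 bip_12 !comp1m !comp0m !addr0 r's r't comp1m comp0m addr0 //.
  + rewrite bip_21 bip_22 !comp1m !comp0m !add0r vs -Ht comp1m comp0m add0r //.
Qed.

Lemma rotb X Y Z0 (u : Mor X Y) (v : Mor Y (shift Z0)) (w : Mor (shift Z0) (shift X)) (x : Mor Z0 X) :
  dist u v w -> w = shiftH x -> dist (- x) u v.
Proof. by move=> D Hw; apply/dist_rot; rewrite shiftHN opprK -Hw. Qed.

Lemma unshift_dist X Y Z (a : Mor X Y) (b : Mor Y Z) (c : Mor Z (shift X)) :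
  dist (shiftH a) (shiftH b) (shiftH c) -> dist (- a) (- b) (- c).
Proof.
move=> D.
have D1 := rotb D (erefl _).
have D2 := rotb D1 (erefl _).
exact: rotb D2 (erefl _).
Qed.

Lemma is_iso_refl X : is_iso X X.
Proof. by exists (idm X), (idm X); rewrite comp1m. Qed.

Lemma is_iso_sym X Y : is_iso X Y -> is_iso Y X.
Proof. by move=> [f [g [H1 H2]]]; exists g, f. Qed.

Lemma zero_iso X Y X0 Y0 :
  (forall f : Mor X0 Y0, f = 0) -> is_iso X X0 -> is_iso Y Y0 -> forall f : Mor X Y, f = 0.
Proof.
move=> H [p [p' [H1 H2]]] [q [q' [H3 H4]]] f.
have E : f = comp q' (comp (comp (comp q f) p') p) by rewrite -!compA H1 compm1 compA H3 comp1m.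
by rewrite E (H (comp (comp q f) p')) comp0m compm0.
Qed.

Lemma unshift_zero (P B0 S0 : Obj C) :
  (forall f : Mor S0 (shift B0), f = 0) -> is_iso (shift P) S0 -> forall f : Mor P B0, f = 0.
Proof.
move=> H Hi f; apply: shiftH_eq0.
exact: (zero_iso H Hi (is_iso_refl _)).
Qed.

Lemma good_iso (P : subcat C) X Y : good_subcat P -> is_iso X Y -> P X -> P Y.
Proof. by move=> [H _]; apply: H. Qed.

Lemma good_retract (P : subcat C) (M N : Obj C) (s : Mor M N) (r : Mor N M) :
  good_subcat P -> comp r s = idm M -> P N -> P M.
Proof.
move=> G Hrs PN.
have [K HK] := retract_bip Hrs.
have := good_iso G HK PN.
by case: G => [_ [_ [_ Hs]]] /Hs [].
Qed.

Lemma LC (A B : subcat C) (M : Obj C) : cotorsion_pair A B ->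
  (forall B0, B B0 -> forall f : Mor M (shift B0), f = 0) -> A M.
Proof.
move=> [gA [gB [dec orth]]] H.
have [X0 [Y0 [u [v [w [AX [[B' [HB' Hi]] D]]]]]]] := dec M.
have v0 : v = 0.
  case: Hi => [p [p' [H1 H2]]].
  by rewrite -(comp1m v) -H1 -compA (H _ HB' (comp p v)) compm0.
have [sg Hsg] : exists g, idm M = comp u g by apply: (exact_l D); rewrite v0 comp0m.
exact: (good_retract (s:=sg) (r:=u) gA (esym Hsg) AX).
Qed.

Lemma RC (A B : subcat C) (M : Obj C) : cotorsion_pair A B ->
  (forall A0, A A0 -> forall f : Mor A0 (shift M), f = 0) -> B M.
Proof.
move=> [gA [gB [dec orth]]] H.
have [X0 [Y0 [u [v [w [AX [[B' [HB' [p [p' [H1 H2]]]]] D]]]]]]] := dec (shift M).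
have u0 : u = 0 by apply: H.
have [r Hr] : exists r, idm (shift M) = comp r v by apply: (exact_r D); rewrite u0 compm0.
have [be Hbe] := shiftH_surj (comp p v).
have [rh Hrh] := shiftH_surj (comp r p').
have Hc : comp rh be = idm M.
  apply: shiftH_inj; rewrite shiftH_comp Hbe Hrh shiftH_id.
  by rewrite -compA (compA p') H1 comp1m Hr.
exact: (good_retract (s:=be) (r:=rh) gB Hc HB').
Qed.
End Basics.

Section Twin.
Variable C : TriCat.
Variables S T U V : subcat C.
Hypothesis tw : twin_cotorsion_pair S T U V.
Implicit Types X Y Z : Obj C.

Let cpST : cotorsion_pair S T := tw.1.
Let cpUV : cotorsion_pair U V := tw.2.1.
Let oSV : forall X Y, S X -> V Y -> forall f : Mor X (shift Y), f = 0 := tw.2.2.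
Let oST : forall X Y, S X -> T Y -> forall f : Mor X (shift Y), f = 0 := cpST.2.2.2.
Let oUV : forall X Y, U X -> V Y -> forall f : Mor X (shift Y), f = 0 := cpUV.2.2.2.
Let gS : good_subcat S := cpST.1.
Let gT : good_subcat T := cpST.2.1.
Let gU : good_subcat U := cpUV.1.
Let gV : good_subcat V := cpUV.2.1.
Let decST : forall M, star S (shift_sub T) M := cpST.2.2.1.
Let decUV : forall M, star U (shift_sub V) M := cpUV.2.2.1.

Notation W := (Wc S T U V).

Lemma W_zobj : W zobj.
Proof. by split; [case: gU => _ [] | case: gT => _ []]. Qed.

Lemma W_bip X Y : W X -> W Y -> W (bip X Y).
Proof.
move=> [UX TX] [UY TY]; split.
- by case: gU => _ [_ [H _]]; apply: H.
- by case: gT => _ [_ [H _]]; apply: H.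
Qed.

Lemma factorsW0 X Y : factorsW S T U V (0 : Mor X Y).
Proof. by exists zobj, 0, 0; split; [exact: W_zobj | rewrite compm0]. Qed.

Lemma factorsW_comp X Y W0 (a : Mor X W0) (b : Mor W0 Y) : W W0 -> factorsW S T U V (comp b a).
Proof. by move=> HW; exists W0, a, b. Qed.

Lemma factorsW_add X Y (f g : Mor X Y) :
  factorsW S T U V f -> factorsW S T U V g -> factorsW S T U V (f + g).
Proof.
move=> [W1 [a1 [b1 [H1 ->]]]] [W2 [a2 [b2 [H2 ->]]]].
exists (bip W1 W2), (comp (bin1 W1 W2) a1 + comp (bin2 W1 W2) a2),
  (comp b1 (bpr1 W1 W2) + comp b2 (bpr2 W1 W2)).
by split; [exact: W_bip | rewrite bip_comp].
Qed.

Lemma factorsW_opp X Y (f : Mor X Y) : factorsW S T U V f -> factorsW S T U V (- f).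
Proof. by move=> [W1 [a [b [H ->]]]]; exists W1, a, (- b); rewrite compNl. Qed.

Lemma factorsW_compl X Y Z (f : Mor X Y) (g : Mor Y Z) :
  factorsW S T U V f -> factorsW S T U V (comp g f).
Proof. by move=> [W1 [a [b [H ->]]]]; exists W1, a, (comp g b); rewrite compA. Qed.

Lemma factorsW_compr X Y Z (f : Mor X Y) (g : Mor Z X) :
  factorsW S T U V f -> factorsW S T U V (comp f g).
Proof. by move=> [W1 [a [b [H ->]]]]; exists W1, (comp a g), b; rewrite compA. Qed.

Lemma eqW_refl X Y (f : Mor X Y) : eqW S T U V f f.
Proof. by rewrite /eqW subrr; exact: factorsW0. Qed.

Lemma eqW_sym X Y (f g : Mor X Y) : eqW S T U V f g -> eqW S T U V g f.
Proof. by rewrite /eqW => /factorsW_opp; rewrite opprB. Qed.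

Lemma eqW_trans X Y (f g h : Mor X Y) : eqW S T U V f g -> eqW S T U V g h -> eqW S T U V f h.
Proof.
rewrite /eqW => H1 H2; have := factorsW_add H1 H2.
by rewrite addrA subrK.
Qed.

Lemma eqW_compl X Y Z (f g : Mor X Y) (h : Mor Y Z) :
  eqW S T U V f g -> eqW S T U V (comp h f) (comp h g).
Proof. by rewrite /eqW -compBr; apply: factorsW_compl. Qed.

Lemma eqW_compr X Y Z (f g : Mor X Y) (h : Mor Z X) :
  eqW S T U V f g -> eqW S T U V (comp f h) (comp g h).
Proof. by rewrite /eqW -compBl; apply: factorsW_compr. Qed.

Lemma eqW_eq X Y (f g : Mor X Y) : f = g -> eqW S T U V f g.
Proof. by move=> ->; exact: eqW_refl. Qed.


Lemma U_Cminus M : U M -> Cminus S T U V M.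
Proof.
move=> UM.
have [S1 [Q [s' [t' [r' [SS1 [[T1 [TT1 [ph [ph' [H1 H2]]]]] D]]]]]]] := decST (shift M).
have D1 := dist_tr3 H1 H2 D.
have [r0 Hr0] := shiftH_surj (comp r' ph').
have D2 := rotb D1 (esym Hr0).
have [t0 Ht0] := shiftH_surj (comp ph t').
have D3 := rotb D2 (esym Ht0).
have [F [p [p' [H3 H4]]]] := shift_ess S1.
have D4 := dist_tr3 H4 H3 D3.
have [s0 Hs0] := shiftH_surj (comp s' p).
have D5 := rotb D4 (esym Hs0).
have isoF : is_iso (shift F) S1 by exists p, p'.
exists F, T1, (- s0), (- t0), (comp p' (- r0)).
split; first by exists S1.
split; last exact: D5.
split=> //.
apply: (LC cpUV) => B0 VB0 f.
have Dr := (dist_rot _ _ _).1 D5.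
have [g Hg] := exact_r (f:=f) Dr (oUV UM VB0 _).
rewrite Hg (zero_iso (oSV SS1 VB0) isoF (is_iso_refl _) g) comp0m //.
Qed.

Lemma T_Cplus M : T M -> Cplus S T U V M.
Proof.
move=> TM.
have [U1 [Q [x [y [z [UU1 [[V1 [VV1 Hi]] D]]]]]]] := decUV M.
exists U1, Q, x, y, z.
split; last split; [| by exists V1 | exact: D].
split=> //.
apply: (RC cpST) => A0 SA0 f.
have Dr := (dist_rot _ _ _).1 ((dist_rot _ _ _).1 D).
have [g Hg] : exists g, f = comp z g.
  apply: (exact_l Dr); exact: (oST SA0 TM).
by rewrite Hg (zero_iso (oSV SA0 VV1) (is_iso_refl _) Hi g) compm0.
Qed.


Lemma minus_fix Z : star (unshift_sub S) U Z -> Cminus S T U V Z.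
Proof.
move=> [P [E [al [be [ga [[S0 [SS0 isoP]] [UE D]]]]]]].
have [F2 [T2 [sg [ta [rh [[S2 [SS2 isoF2]] [WT2 D2]]]]]]] := U_Cminus UE.
have Dr := (dist_rot _ _ _).1 D.
have D2r := (dist_rot _ _ _).1 D2.
have [G' [m2 [n2 D3]]] := dist_ext (comp ta be).
have [f [g [Do _]]] := dist_oct Dr D2r D3.
have SG' : S G'.
  apply: (LC cpST) => B0 TB0 f1.
  have [g1 Hg1] := exact_r (f:=f1) Do (zero_iso (oST SS0 TB0) isoP (is_iso_refl _) _).
  by rewrite Hg1 (zero_iso (oST SS2 TB0) isoF2 (is_iso_refl _) g1) comp0m.
have [G [p [p' [H3 H4]]]] := shift_ess G'.
have [x Dx] := rot_back H4 H3 D3.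
exists G, T2, x, (comp ta be), (comp p' m2).
split; first by exists G'; split=> //; exists p, p'.
by split.
Qed.

Lemma plus_fix Z : star T (shift_sub V) Z -> Cplus S T U V Z.
Proof.
move=> [E [Q [al [be [ga [TE [[VQ [VVQ isoQ]] D]]]]]]].
have [U2 [Q2 [x2 [y2 [z2 [WU2 [[V2 [VV2 isoQ2]] D2]]]]]]] := T_Cplus TE.
have [N4 [m4 [n4 D3]]] := dist_ext (comp al x2).
have [f [g [Do _]]] := dist_oct D2 D D3.
have [V4 [p [p' [H3 H4]]]] := shift_ess N4.
have VV4 : V V4.
  apply: (RC cpUV) => A0 UA0 f1.
  have [g1 Hg1] := exact_l (f:=comp p f1) Do
    (zero_iso (oUV UA0 VVQ) (is_iso_refl _) isoQ _).
  have g10 := zero_iso (oUV UA0 VV2) (is_iso_refl _) isoQ2 g1.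
  by rewrite -(comp1m f1) -H3 -compA Hg1 g10 !compm0.
exists U2, N4, (comp al x2), m4, n4.
split=> //; split; last exact: D3.
by exists V4; split=> //; exists p', p.
Qed.


Lemma refl_data X : exists Z (m : Mor X Z) F (n : Mor Z (shift F)) UX (a : Mor UX X) (s : Mor F UX),
  dist (comp a s) m n /\ Cplus S T U V Z /\ U UX /\ unshift_sub S F.
Proof.
have [UX [Q1 [a [b [c [UUX [HQ1 D]]]]]]] := decUV X.
have [F [T1 [s [t [r [HF [WT1 D1]]]]]]] := U_Cminus UUX.
have [Z [m [n D3]]] := dist_ext (comp a s).
have [f [g [Do _]]] := dist_oct D1 D D3.
exists Z, m, F, n, UX, a, s; split=> //; split=> //.
by exists T1, Q1, f, g, (comp (shiftH t) c).
Qed.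

Lemma refl_prop X Z (m : Mor X Z) F (n : Mor Z (shift F)) UX (a : Mor UX X) (s : Mor F UX) :
  dist (comp a s) m n -> Cplus S T U V Z -> U UX -> unshift_sub S F -> tau_plus_of S T U V m.
Proof.
move=> D CZ UUX [S1 [SS1 isoF]].
split=> // Y [WY [QY [iY [jY [kY [WWY [[VY [VVY isoY]] DY]]]]]]].
split.
- move=> g.
  have [c Hc] : exists c, comp g a = comp iY c.
    apply: (exact_l DY); rewrite compA.
    exact: (zero_iso (oUV UUX VVY) (is_iso_refl _) isoY).
  have [h Hh] : exists h, g = comp h m.
    apply: (exact_r D); rewrite compA Hc -compA.
    by rewrite (unshift_zero (oST SS1 WWY.2) isoF (comp c s)) compm0.
  by exists h; rewrite Hh; exact: eqW_refl.
- move=> h1 h2 [W0 [al [be [HW Heq]]]].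
  have [al' Hal] : exists al', al = comp al' m.
    apply: (exact_r D); exact: (unshift_zero (oST SS1 HW.2) isoF).
  have Hk : comp (h1 - h2 - comp be al') m = 0.
    by rewrite compBl compBl Heq -compA -Hal subrr.
  have [e He] := exact_r ((dist_rot _ _ _).1 D) Hk.
  have [e' He'] : exists e', e = comp iY e'.
    apply: (exact_l DY).
    exact: (zero_iso (oSV SS1 VVY) isoF isoY).
  rewrite /eqW -(subrK (comp be al') (h1 - h2)).
  apply: factorsW_add; last exact: factorsW_comp HW.
  by rewrite He He' -compA; apply: factorsW_comp WWY.
Qed.

Lemma refl_minus X Z (m : Mor X Z) F (n : Mor Z (shift F)) UX (a : Mor UX X) (s : Mor F UX) :
  dist (comp a s) m n -> unshift_sub S F -> Cminus S T U V X -> Cminus S T U V Z.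
Proof.
move=> D [S1 [SS1 isoF]] [P [W0 [p [q [r [HP [WW0 DX]]]]]]].
apply: minus_fix.
have Dr := (dist_rot _ _ _).1 D.
have [E [m' [n' D3]]] := dist_ext (comp m p).
have [f [g [Do _]]] := dist_oct DX Dr D3.
exists P, E, (comp m p), m', n'; split=> //; split; last exact: D3.
apply: (LC cpUV) => B0 VB0 f1.
have [g1 Hg1] := exact_r (f:=f1) Do (oUV WW0.1 VB0 _).
by rewrite Hg1 (zero_iso (oSV SS1 VB0) isoF (is_iso_refl _) g1) comp0m.
Qed.


Lemma L2gen M : exists F T1 (s : Mor F M) (t : Mor M T1) (r : Mor T1 (shift F)),
  dist s t r /\ T T1 /\ unshift_sub S F.
Proof.
have [S1 [Q [s' [t' [r' [SS1 [[T1 [TT1 [ph [ph' [H1 H2]]]]] D]]]]]]] := decST (shift M).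
have D1 := dist_tr3 H1 H2 D.
have [r0 Hr0] := shiftH_surj (comp r' ph').
have D2 := rotb D1 (esym Hr0).
have [t0 Ht0] := shiftH_surj (comp ph t').
have D3 := rotb D2 (esym Ht0).
have [F [p [p' [H3 H4]]]] := shift_ess S1.
have D4 := dist_tr3 H4 H3 D3.
have [s0 Hs0] := shiftH_surj (comp s' p).
have D5 := rotb D4 (esym Hs0).
exists F, T1, (- s0), (- t0), (comp p' (- r0)); split=> //; split=> //.
by exists S1; split=> //; exists p, p'.
Qed.

Lemma corefl_data Y : exists Z (ze : Mor Z Y) T0 (g : Mor Y T0) Q1 (y : Mor T0 Q1) (w' : Mor Q1 (shift Z)),
  dist ze (comp y g) w' /\ Cminus S T U V Z /\ T T0 /\ shift_sub V Q1.
Proof.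
have [F [T0 [f [g [h [D1 [TT0 HF]]]]]]] := L2gen Y.
have [U1 [Q1 [x [y [z [WU1 [HQ1 D2]]]]]]] := T_Cplus TT0.
have [N [m2 [n2 D3]]] := dist_ext (comp y g).
have [f0 [g0 [Do _]]] := dist_oct ((dist_rot _ _ _).1 D1) ((dist_rot _ _ _).1 D2) D3.
have [Z [p [p' [H3 H4]]]] := shift_ess N.
have [ze Dz] := rot_back H4 H3 D3.
exists Z, ze, T0, g, Q1, y, (comp p' m2); split=> //; split=> //.
have Dt := dist_tr2 H4 H3 Do.
have [a1 Ha1] := shiftH_surj (comp p' f0).
have [b1 Hb1] := shiftH_surj (comp g0 p).
have [c1 Hc1] := shiftH_surj (comp (shiftH h) (- shiftH x)).
rewrite -Ha1 -Hb1 -Hc1 in Dt.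
exists F, U1, (- a1), (- b1), (- c1); split=> //; split=> //.
exact: unshift_dist.
Qed.

Lemma corefl_prop Y Z (ze : Mor Z Y) T0 (g : Mor Y T0) Q1 (y : Mor T0 Q1) (w' : Mor Q1 (shift Z)) :
  dist ze (comp y g) w' -> Cminus S T U V Z -> T T0 -> shift_sub V Q1 -> tau_minus_of S T U V ze.
Proof.
move=> D CZ TT0 [V1 [VV1 isoQ1]].
split=> // Z0 [P [W0 [p [q [r [[S0 [SS0 isoP]] [WW0 D0]]]]]]].
split.
- move=> g1.
  have [c Hc] : exists c, comp g g1 = comp c q.
    apply: (exact_r D0); rewrite -compA.
    exact: (unshift_zero (oST SS0 TT0) isoP).
  have [h Hh] : exists h, g1 = comp ze h.
    apply: (exact_l D); rewrite -compA Hc compA.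
    by rewrite (zero_iso (oUV WW0.1 VV1) (is_iso_refl _) isoQ1 (comp y c)) comp0m.
  by exists h; rewrite Hh; exact: eqW_refl.
- move=> h1 h2 [W1 [al [be [HW Heq]]]].
  have [be' Hbe] : exists be', be = comp ze be'.
    apply: (exact_l D); exact: (zero_iso (oUV HW.1 VV1) (is_iso_refl _) isoQ1).
  have Hk : comp ze (h1 - h2 - comp be' al) = 0.
    by rewrite compBr compBr Heq compA -Hbe subrr.
  case: isoQ1 => [ph [ph' [H1 H2]]].
  have [x Dx] := rot_back H1 H2 D.
  have [e He] := exact_l Dx Hk.
  have [e' He'] : exists e', e = comp e' q.
    apply: (exact_r D0).
    exact: (unshift_zero (oSV SS0 VV1) isoP).
  rewrite /eqW -(subrK (comp be' al) (h1 - h2)).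
  apply: factorsW_add; last exact: factorsW_comp HW.
  by rewrite He He' compA; apply: factorsW_comp WW0.
Qed.

Lemma corefl_plus Y Z (ze : Mor Z Y) T0 (g : Mor Y T0) Q1 (y : Mor T0 Q1) (w' : Mor Q1 (shift Z)) :
  dist ze (comp y g) w' -> shift_sub V Q1 -> Cplus S T U V Y -> Cplus S T U V Z.
Proof.
move=> D [V1 [VV1 isoQ1]] [W0 [QY [p [q [r [WW0 [[VY [VVY isoQY]] DY]]]]]]].
apply: plus_fix.
have [N3 [m3 [n3 D3]]] := dist_ext (comp q ze).
have [f [g0 [Do _]]] := dist_oct D ((dist_rot _ _ _).1 DY) D3.
have [E [p1 [p1' [H3 H4]]]] := shift_ess N3.
have [x3 Dx] := rot_back H4 H3 D3.
exists E, QY, x3, (comp q ze), (comp p1' m3); split; last split; [| by exists VY | exact: Dx].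
apply: (RC cpST) => A0 SA0 f1.
have [g1 Hg1] := exact_l (f:=comp p1 f1) Do (oST SA0 WW0.2 _).
have g10 := zero_iso (oSV SA0 VV1) (is_iso_refl _) isoQ1 g1.
by rewrite -(comp1m f1) -H3 -compA Hg1 g10 !compm0.
Qed.


Lemma main1 (X X' : Obj C) (eta : Mor X X') :
  Cminus S T U V X -> tau_plus_of S T U V eta ->
  exists H0, Hc S T U V H0 /\ isoW S T U V X' H0.
Proof.
move=> CX [CX' Heta].
have [Z [m [F [n [UX [a [s [D [CZ [UUX HF]]]]]]]]]] := refl_data X.
have [_ Hm] := refl_prop D CZ UUX HF.
exists Z; split; first by split=> //; exact: refl_minus D HF CX.
have [h Hh] := (Heta Z CZ).1 m.
have [k Hk] := (Hm X' CX').1 eta.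
exists h, k; split.
- apply: (Heta X' CX').2.
  apply: eqW_trans (eqW_eq (esym (compA _ _ _))) _.
  apply: eqW_trans (eqW_compl k Hh) _.
  by apply: eqW_trans Hk _; apply: eqW_eq; rewrite comp1m.
- apply: (Hm Z CZ).2.
  apply: eqW_trans (eqW_eq (esym (compA _ _ _))) _.
  apply: eqW_trans (eqW_compl h Hk) _.
  by apply: eqW_trans Hh _; apply: eqW_eq; rewrite comp1m.
Qed.

Lemma main2 (Y Y' : Obj C) (eps : Mor Y' Y) :
  Cplus S T U V Y -> tau_minus_of S T U V eps ->
  exists H0, Hc S T U V H0 /\ isoW S T U V Y' H0.
Proof.
move=> CY [CY' Heps].
have [Z [ze [T0 [g [Q1 [y [w' [D [CZ [TT0 HQ1]]]]]]]]]] := corefl_data Y.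
have [_ Hz] := corefl_prop D CZ TT0 HQ1.
exists Z; split; first by split=> //; exact: corefl_plus D HQ1 CY.
have [h Hh] := (Heps Z CZ).1 ze.
have [k Hk] := (Hz Y' CY').1 eps.
exists k, h; split.
- apply: (Heps Y' CY').2.
  apply: eqW_trans (eqW_eq (compA _ _ _)) _.
  apply: eqW_trans (eqW_compr k Hh) _.
  by apply: eqW_trans Hk _; apply: eqW_eq; rewrite compm1.
- apply: (Hz Z CZ).2.
  apply: eqW_trans (eqW_eq (compA _ _ _)) _.
  apply: eqW_trans (eqW_compr h Hk) _.
  by apply: eqW_trans Hh _; apply: eqW_eq; rewrite compm1.
Qed.

End Twin.

Theorem corollary2p15 (C : TriCat) (S T U V : subcat C) :
  twin_cotorsion_pair S T U V ->
  (forall (X X' : Obj C) (eta : Mor X X'),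
     Cminus S T U V X -> tau_plus_of S T U V eta ->
     exists H0, Hc S T U V H0 /\ isoW S T U V X' H0) /\
  (forall (Y Y' : Obj C) (eps : Mor Y' Y),
     Cplus S T U V Y -> tau_minus_of S T U V eps ->
     exists H0, Hc S T U V H0 /\ isoW S T U V Y' H0).
Proof.
move=> tw; split=> ? ? ?; [exact: main1 | exact: main2].
Qed.
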